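(* Let $k\ge1$ and $S_a,S_b\in\{0,1\}^{k^2}$. Let $G$ be the undirected weighted graph on vertices $\ell_i,\ell_i',r_i,r_i'$ ($1\le i\le k$) with edges $\{\ell_i,r_i\}$ and $\{\ell_i',r_i'\}$ of weight $1$ for each $i$, the edge $\{\ell_i,\ell_j'\}$ of weight $2$ whenever $S_a[(i-1)k+j]=1$, and the edge $\{r_i,r_j'\}$ of weight $2$ whenever $S_b[(i-1)k+j]=1$. If there is an index $m$ with $S_a[m]=S_b[m]=1$, then $G$ contains a simple cycle of weight $6$; otherwise every simple cycle of $G$ has weight at least $8$.
   Context: For a bit string $S$, $S[m]$ denotes its $m$-th bit. *)

(* Defs.v *)
From HB Require Import structures.
From mathcomp Require Import all_boot.
Set Implicit Arguments. Unset Strict Implicit. Unset Printing Implicit Defensive.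

(* Vertices l_i, l'_i, r_i, r'_i with i : 'I_k (0-based: paper's i = our i+1). *)
Inductive vtx (k : nat) : Type :=
| VL of 'I_k | VL' of 'I_k | VR of 'I_k | VR' of 'I_k.

Definition vtx_code k (v : vtx k) : 'I_4 * 'I_k :=
  match v with
  | VL i => (inord 0, i) | VL' i => (inord 1, i)
  | VR i => (inord 2, i) | VR' i => (inord 3, i)
  end.
Definition vtx_decode k (p : 'I_4 * 'I_k) : option (vtx k) :=
  match val p.1 with
  | 0 => Some (VL p.2) | 1 => Some (VL' p.2)
  | 2 => Some (VR p.2) | 3 => Some (VR' p.2) | _ => None
  end.
Lemma vtx_codeK k : pcancel (@vtx_code k) (@vtx_decode k).
Proof. by case=> i; rewrite /vtx_decode /= inordK. Qed.
HB.instance Definition _ k := Finite.copy (vtx k) (pcan_type (@vtx_codeK k)).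

(* Bit m (0-based) of a bit string S in {0,1}^(k^2); paper's S[m] = bit S (m-1). *)
Definition bit k (S : (k ^ 2).-tuple bool) (m : nat) : bool := nth false S m.

(* Edge weight of {u,v} in G(k,Sa,Sb); None if {u,v} is not an edge.
   Paper's S[(i-1)k+j] with 1-based i,j is bit S (i*k+j) with 0-based i,j. *)
Definition gweight k (Sa Sb : (k ^ 2).-tuple bool) (u v : vtx k) : option nat :=
  match u, v with
  | VL i, VR j | VR j, VL i => if i == j then Some 1 else None
  | VL' i, VR' j | VR' j, VL' i => if i == j then Some 1 else None
  | VL i, VL' j | VL' j, VL i => if bit Sa (i * k + j) then Some 2 else None
  | VR i, VR' j | VR' j, VR i => if bit Sb (i * k + j) then Some 2 else None
  | _, _ => None
  end.

Definition is_edge k Sa Sb (u v : vtx k) : bool := gweight Sa Sb u v != None.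

Definition cyc_pairs (T : Type) (c : seq T) : seq (T * T) := zip c (rot 1 c).

Definition simple_cycle k Sa Sb (c : seq (vtx k)) : Prop :=
  [/\ 3 <= size c, uniq c & all (fun p => is_edge Sa Sb p.1 p.2) (cyc_pairs c)].

Definition cycle_weight k Sa Sb (c : seq (vtx k)) : nat :=
  \sum_(p <- cyc_pairs c) odflt 0 (gweight Sa Sb p.1 p.2).

(* Main.v *)
Require Import Defs.
From HB Require Import structures.
From mathcomp Require Import all_boot zify.
Set Implicit Arguments. Unset Strict Implicit. Unset Printing Implicit Defensive.

Lemma w1 k Sa Sb (a b d : vtx k) :
  gweight Sa Sb a b = Some 1 -> gweight Sa Sb b d = Some 1 -> a = d.
Proof.
case: a => i; case: b => j; case: d => l //=;
try (case: ifP => //); try (case: ifP => //);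
try (move=> /eqP -> /eqP -> //); try (move=> /eqP -> _ _ /eqP -> //).
Qed.
Lemma wval k Sa Sb (a b : vtx k) : is_edge Sa Sb a b ->
  odflt 0 (gweight Sa Sb a b) = 2 \/ gweight Sa Sb a b = Some 1.
Proof.
rewrite /is_edge; case: a => i; case: b => j //=; case: ifP => //; auto.
Qed.

Lemma nth_rot1 T (x0 : T) (s : seq T) i : i < size s ->
  nth x0 (rot 1 s) i = nth x0 s ((i + 1) %% size s).
Proof.
case: s => [//|x t] /= Hi; rewrite rot1_cons nth_rcons.
case: ltnP => H.
  by rewrite modn_small ?addn1 //; lia.
have -> : i = size t by lia.
by rewrite eqxx addn1 modnn.
Qed.

Lemma sum_bound (s : seq nat) :
  (forall i, i < size s -> 3 <= nth 0 s i + nth 0 s ((i+1) %% size s)) ->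
  3 * size s <= 2 * sumn s.
Proof.
move=> H.
have -> : 2 * sumn s = sumn s + sumn (rot 1 s) by rewrite sumn_rot; lia.
have E : forall t : seq nat, sumn t = \sum_(0 <= i < size t) nth 0 t i.
  by move=> t; rewrite sumnE (big_nth 0).
rewrite (E s) (E (rot 1 s)) size_rot -big_split /=.
have -> : 3 * size s = \sum_(0 <= i < size s) 3 by rewrite sum_nat_const_nat subn0 mulnC.
rewrite big_nat_cond [X in _ <= X]big_nat_cond; apply: leq_sum => i /andP [/andP [_ Hi] _].
rewrite nth_rot1 //.
exact: H.
Qed.

Lemma cyc_bound k Sa Sb (c : seq (vtx k)) (x0 : vtx k) : simple_cycle Sa Sb c ->
  3 * size c <= 2 * cycle_weight Sa Sb c.
Proof.
case=> Hn Hu Ha.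
set wt := fun p : vtx k * vtx k => odflt 0 (gweight Sa Sb p.1 p.2).
have -> : cycle_weight Sa Sb c = sumn (map wt (cyc_pairs c))
  by rewrite /cycle_weight sumnE big_map.
have Hs : size (map wt (cyc_pairs c)) = size c
  by rewrite size_map /cyc_pairs size_zip size_rot minnn.
have Hnth : forall i, i < size c -> nth 0 (map wt (cyc_pairs c)) i =
   wt (nth x0 c i, nth x0 c ((i + 1) %% size c)).
  move=> i Hi; rewrite (nth_map (x0, x0)) /cyc_pairs ?size_zip ?size_rot ?minnn //.
  by rewrite nth_zip ?size_rot // nth_rot1.
have Hed : forall i, i < size c ->
   is_edge Sa Sb (nth x0 c i) (nth x0 c ((i + 1) %% size c)).
  move=> i Hi; move/(all_nthP (x0,x0)): Ha.
  rewrite /cyc_pairs size_zip size_rot minnn => /(_ i Hi).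
  by rewrite nth_zip ?size_rot // nth_rot1.
rewrite -{1}Hs; apply: sum_bound => i; rewrite Hs => Hi.
have Hi1 : (i + 1) %% size c < size c by rewrite ltn_mod; case: (size c) Hn.
rewrite !Hnth //.
have [E1|E1] := wval (Hed _ Hi); have [E2|E2] := wval (Hed _ Hi1);
  rewrite /wt /= ?E1 ?E2 //.
have := w1 E1 E2; move/eqP; rewrite nth_uniq //; last by rewrite ltn_mod; case: (size c) Hn.
move/eqP; move: Hn Hi; set n := size c => Hn Hi H.
case: (ltnP (i + 1) n) => h1.
  rewrite (modn_small h1) in H.
  case: (ltnP (i + 1 + 1) n) => h2.
    by rewrite (modn_small h2) in H; lia.
  have e : i + 1 + 1 = n by lia.
  by rewrite e modnn in H; lia.
have e : i + 1 = n by lia.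
rewrite e modnn add0n modn_small in H; lia.
Qed.
Lemma vtx_eqE k (u v : vtx k) : (u == v) = (vtx_code u == vtx_code v).
Proof. by rewrite (inj_eq (pcan_inj (@vtx_codeK k))). Qed.

Lemma tri k Sa Sb (a b d : vtx k) : ~ simple_cycle Sa Sb [:: a; b; d].
Proof.
case=> _ _; rewrite /cyc_pairs /= /is_edge.
by case: a => i; case: b => j; case: d => l //=; repeat case: ifP.
Qed.

Lemma quad k Sa Sb (a b d e : vtx k) :
  (forall i j : 'I_k, bit Sa (i*k+j) -> bit Sb (i*k+j) -> False) ->
  simple_cycle Sa Sb [:: a; b; d; e] -> 12 <= 2 * cycle_weight Sa Sb [:: a; b; d; e] ->
  8 <= cycle_weight Sa Sb [:: a; b; d; e].
Proof.
move=> Hno [_ Hu Ha]; move: Hu Ha.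
rewrite /cycle_weight /cyc_pairs /= !big_cons big_nil /is_edge /=.
case: a => i; case: b => j; case: d => l; case: e => m //=; repeat case: ifP => //.
all: move=> *; repeat match goal with H : is_true (_ == _) |- _ => move/eqP: H => H; subst end.
all: try match goal with H1 : is_true (bit _ (nat_of_ord ?x * ?kk + nat_of_ord ?y)), H2 : is_true (bit _ (nat_of_ord ?x * ?kk + nat_of_ord ?y)) |- _ => exfalso; exact: (Hno x y H1 H2) end.
all: try match goal with H : is_true [&& _, _, _ & _] |- _ => move: H; rewrite !inE !eqxx /= ?orbT ?andbF //= end.
Qed.

Theorem mainTheorem15 (k : nat) (Sa Sb : (k ^ 2).-tuple bool) :
  1 <= k ->
  ((exists m, m < k ^ 2 /\ bit Sa m /\ bit Sb m) ->
     exists c : seq (vtx k), simple_cycle Sa Sb c /\ cycle_weight Sa Sb c = 6)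
  /\
  (~ (exists m, m < k ^ 2 /\ bit Sa m /\ bit Sb m) ->
     forall c : seq (vtx k), simple_cycle Sa Sb c -> 8 <= cycle_weight Sa Sb c).
Proof.
move=> Hk; split.
  case=> m [Hm [HA HB]].
  have Hi : m %/ k < k by rewrite ltn_divLR //; rewrite expnS expn1 in Hm.
  have Hj : m %% k < k by rewrite ltn_mod.
  have Em : (Ordinal Hi) * k + (Ordinal Hj) = m by rewrite /= -divn_eq.
  exists [:: VL (Ordinal Hi); VL' (Ordinal Hj); VR' (Ordinal Hj); VR (Ordinal Hi)].
  rewrite /simple_cycle /cycle_weight /cyc_pairs /= !big_cons big_nil /is_edge /=.
  rewrite !eqxx Em HA HB /=; split => //; split => //.
  by rewrite !inE !vtx_eqE /= !xpair_eqE -!val_eqE /= !inordK.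
move=> Hno c Hc.
have Hno' : forall i j : 'I_k, bit Sa (i*k+j) -> bit Sb (i*k+j) -> False.
  move=> i j HA HB; apply: Hno; exists (i*k+j); split => //.
  have := ltn_ord i; have := ltn_ord j; rewrite expnS expn1; nia.
have x0 : vtx k by exact: VL (Ordinal Hk).
have B := cyc_bound x0 Hc.
move: Hc B; case: c => [|a [|b [|d [|e [|f t]]]]].
- by case.
- by case.
- by case.
- by move=> H; case: (tri H).
- move=> H B; exact: quad.
- move=> _ B.
  have : 5 <= size [:: a, b, d, e, f & t] by [].
  move: B; set W := cycle_weight _ _ _; set n := size _; lia.
Qed.
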